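(* Let $G$ be a graph with a Hamilton path $L=x_0x_1\ldots x_p$. Then there is a bond of $G$ meeting every path of $G$ of length at least $\lceil (p+1)/2\rceil$.
   Context: All graphs are finite, simple and undirected. A Hamilton path is a path containing every vertex of the graph. The length of a path is its number of edges. A bond of $G$ is a minimal nonempty edge-cut, where an edge-cut is a set of edges of the form $\{xy\in E(G): x\in X, y\in V(G)\setminus X\}$ for some $X\subseteq V(G)$. A set of edges meets a path if the path contains at least one edge of the set. *)

(* Defs.v *)
(* A finite simple graph is a symmetric irreflexive relation
   e : rel T on a finType T; an edge xy is represented as the 2-element set [set x; y]. *)
From mathcomp Require Import all_boot.
Set Implicit Arguments. Unset Strict Implicit. Unset Printing Implicit Defensive.

Section Graph.
Variables (T : finType) (e : rel T).

Definition edge_cut (X : {set T}) : {set {set T}} :=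
  [set [set x; y] | x in X, y in ~: X & e x y].

Definition is_edge_cut (F : {set {set T}}) : Prop :=
  exists X : {set T}, F = edge_cut X.

Definition is_bond (F : {set {set T}}) : Prop :=
  [/\ is_edge_cut F, F != set0 &
      forall F', is_edge_cut F' -> F' != set0 -> F' \subset F -> F' = F].

(* a path x :: s : consecutive vertices adjacent, all vertices distinct;
   its length is size s (number of edges) *)
Definition is_gpath (x : T) (s : seq T) : bool := path e x s && uniq (x :: s).

Definition meets (F : {set {set T}}) (x : T) (s : seq T) : bool :=
  has (fun uv : T * T => [set uv.1; uv.2] \in F) (zip (x :: s) s).

Definition hamilton_path (x : T) (s : seq T) : Prop :=
  is_gpath x s /\ forall v : T, v \in x :: s.

End Graph.

(* Main.v *)
Require Import Defs.
From mathcomp Require Import all_boot.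
From mathcomp Require Import zify.
Set Implicit Arguments. Unset Strict Implicit.

Lemma cut_sides (T : finType) (e : rel T) X u v :
  [set u; v] \in edge_cut e X -> (u \in X) != (v \in X).
Proof.
case/imset2P=> a b aX; rewrite inE in_setC => /andP[bX _] E.
have ua : u \in [set a; b] by rewrite -E !inE eqxx.
have va : v \in [set a; b] by rewrite -E !inE eqxx orbT.
have au : a \in [set u; v] by rewrite E !inE eqxx.
have bu : b \in [set u; v] by rewrite E !inE eqxx orbT.
move: ua va au bu; rewrite !inE.
case/orP=> /eqP->; case/orP=> /eqP->; rewrite ?eqxx ?orbT ?orbb //.
- by move=> _ /eqP ba; move: bX; rewrite ba aX.
- by rewrite aX (negbTE bX).
- by rewrite aX (negbTE bX).
- by move=> /eqP ab _; move: bX; rewrite -ab aX.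
Qed.

Lemma cut_mem (T : finType) (e : rel T) (e_sym : symmetric e) (X : {set T}) u v :
  e u v -> (u \in X) != (v \in X) -> [set u; v] \in edge_cut e X.
Proof.
move=> euv; case uX: (u \in X); case vX: (v \in X) => //= _.
  by apply/imset2P; exists u v => //; rewrite inE in_setC vX euv.
by rewrite setUC; apply/imset2P; exists v u => //; rewrite inE in_setC uX e_sym euv.
Qed.

Lemma cut_C (T : finType) (e : rel T) (e_sym : symmetric e) (X : {set T}) :
  edge_cut e (~: X) = edge_cut e X.
Proof.
suff H : forall X, edge_cut e (~: X) \subset edge_cut e X.
  apply/eqP; rewrite eqEsubset H /=.
  by rewrite -[in Z in edge_cut e Z \subset _](setCK X) H.
move=> Y; apply/subsetP=> f /imset2P[a b aX]; rewrite inE => /andP[bX eab] ->.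
apply: cut_mem => //; move: aX bX; rewrite !in_setC.
by case: (a \in Y); case: (b \in Y).
Qed.

Lemma same_side (T : finType) (e : rel T) (e_sym : symmetric e) (X : {set T}) y s :
  path e y s -> ~~ meets (edge_cut e X) y s ->
  all (fun v => (v \in X) == (y \in X)) (y :: s).
Proof.
elim: s y => [|z s IH] y /=; first by rewrite eqxx.
case/andP=> eyz pz; rewrite /meets /= negb_or => /andP[nyz nm].
have yz : (y \in X) = (z \in X).
  by apply/eqP; apply: contraR nyz => H; apply: cut_mem.
rewrite eqxx /=; have := IH z pz nm; rewrite /= yz.
by [].
Qed.

Theorem lemma5 (T : finType) (e : rel T) (e_sym : symmetric e) (e_irr : irreflexive e)
  (x0 : T) (L : seq T) (HL : hamilton_path e x0 L) (Hp : 0 < size L) :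
  exists F : {set {set T}}, is_bond e F /\
    forall (y : T) (s : seq T), is_gpath e y s ->
      uphalf (size L).+1 <= size s -> meets F y s.
Proof.
case: HL => /andP[pathL uniqP] allV.
set P := x0 :: L.
set n := (size L).+1.
have sizeP : size P = n by [].
set k := n./2.
have Hn := odd_double_half n.
rewrite -addnn in Hn.
have Ho : odd n <= 1 by case: (odd n).
have Hk1 : 0 < k by rewrite /k; lia.
have Hkn : k < n by rewrite /k; lia.
have idx : forall i, i < n -> index (nth x0 P i) P = i.
  by move=> i Hi; apply: index_uniq.
have adj : forall i, i.+1 < n -> e (nth x0 P i) (nth x0 P i.+1).
  by move=> i Hi; move/(pathP x0): pathL; apply.
set X := [set v | index v P < k].
have inX : forall i, i < n -> (nth x0 P i \in X) = (i < k).
  by move=> i Hi; rewrite inE idx.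
have vP : forall v, nth x0 P (index v P) = v by move=> v; apply: nth_index.
have vn : forall v, index v P < n by move=> v; rewrite -sizeP index_mem.
exists (edge_cut e X); split.
  split.
  - by exists X.
  - apply/set0Pn; exists [set nth x0 P k.-1; nth x0 P k].
    have Hk : k = k.-1.+1 by rewrite prednK.
    apply: cut_mem => //.
      by rewrite {2}Hk; apply: adj; rewrite -Hk.
    rewrite !inX //; last by lia.
    by rewrite ltnn; lia.
  move=> F' [Y ->] F'ne sub.
  have A : forall u v, e u v -> (u \in X) = (v \in X) -> (u \in Y) = (v \in Y).
    move=> u v euv uv; apply/eqP; case: eqP => // /eqP H.
    have := cut_sides (subsetP sub _ (cut_mem e_sym euv H)).
    by rewrite uv eqxx.
  have claim : forall i, i < n ->
     (nth x0 P i \in Y) = if i < k then nth x0 P 0 \in Y else nth x0 P k \in Y.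
    elim=> [|i IH] Hi; first by rewrite Hk1.
    have IH' := IH (ltnW Hi).
    have := A _ _ (adj i Hi).
    rewrite !inX //; last exact: ltnW.
    case: (ltngtP i.+1 k) => H1.
    - by move=> <- //; rewrite IH' (ltnW H1).
    - by move=> <- //; rewrite IH' ltnNge -ltnS H1.
    - by rewrite H1.
  have hY : forall v, (v \in Y) = if v \in X then nth x0 P 0 \in Y else nth x0 P k \in Y.
    by move=> v; rewrite -{1 2}(vP v) claim // inX.
  have cut0 : forall Z : {set T}, Z = setT \/ Z = set0 -> edge_cut e Z = set0.
    move=> Z HZ; apply/setP=> f; rewrite inE; apply/negbTE.
    apply/negP => /imset2P[a b aZ]; rewrite inE in_setC => /andP[bZ _] _.
    by case: HZ aZ bZ => ->; rewrite !inE.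
  case Ha: (nth x0 P 0 \in Y); case Hb: (nth x0 P k \in Y).
  - exfalso; move: F'ne; rewrite cut0 ?eqxx //; left.
    by apply/setP=> v; rewrite hY Ha Hb if_same in_setT.
  - congr (edge_cut e _); apply/setP=> v; rewrite hY Ha Hb; by case: (v \in X).
  - rewrite -(cut_C e_sym X); congr (edge_cut e _); apply/setP=> v; rewrite hY Ha Hb in_setC.
    by case: (v \in X).
  - exfalso; move: F'ne; rewrite cut0 ?eqxx //; right.
    by apply/setP=> v; rewrite hY Ha Hb if_same in_set0.
move=> y s /andP[py uS] Hs; apply: contraTT isT => nm.
have al := same_side e_sym py nm.
have Hsz : size (y :: s) <= uphalf n.
  rewrite uphalf_half.
  case yX: (y \in X).
  - apply: (@leq_trans (size [seq nth x0 P i | i <- iota 0 k])); last first.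
      by rewrite size_map size_iota; lia.
    apply: uniq_leq_size => // v vs.
    move/allP: al => /(_ v vs) /eqP; rewrite yX inE => vX.
    by rewrite -(vP v); apply: map_f; rewrite mem_iota.
  - apply: (@leq_trans (size [seq nth x0 P i | i <- iota k (n - k)])); last first.
      by rewrite size_map size_iota; lia.
    apply: uniq_leq_size => // v vs.
    move/allP: al => /(_ v vs) /eqP; rewrite yX inE => vX.
    rewrite -(vP v); apply: map_f; rewrite mem_iota.
    move/negbT: vX; rewrite -leqNgt => vX; have := vn v; lia.
by move: Hsz Hs => /=; lia.
Qed.
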